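(* Let $h\ge2$ and $1\le r\le m\le n$. The core of $\mathrm{Bil}_r(\mathbb{Z}_h^{m\times n})$ is a maximum clique (a complete graph on $h^{nr}$ vertices), and $\mathrm{Bil}_r(\mathbb{Z}_h^{m\times n})$ is itself a core if and only if $r=m$.
   Context: $\mathbb{Z}_h$ is the residue class ring modulo $h$. The inner rank $\rho(A)$ of a nonzero $A\in\mathbb{Z}_h^{m\times n}$ is the least $r$ with $A=BC$, $B\in\mathbb{Z}_h^{m\times r}$, $C\in\mathbb{Z}_h^{r\times n}$; $\rho(0)=0$. $\mathrm{Bil}_r(\mathbb{Z}_h^{m\times n})$ is the graph on $\mathbb{Z}_h^{m\times n}$, distinct $A,B$ adjacent iff $\rho(A-B)\le r$. A graph is a core if every endomorphism (homomorphism to itself) is an automorphism; a core of a graph $\Gamma$ is a subgraph $\Delta$ that is a core and admits a homomorphism $\Gamma\to\Delta$ (unique up to isomorphism). *)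

(* Defs.v *)
From HB Require Import structures.
From mathcomp Require Import all_boot all_order all_algebra.
Set Implicit Arguments. Unset Strict Implicit. Unset Printing Implicit Defensive.
Import GRing.Theory.
Local Open Scope ring_scope.

Definition ghom (T U : Type) (eT : rel T) (eU : rel U) (f : T -> U) : Prop :=
  forall x y, eT x y -> eU (f x) (f y).

Definition gauto (T : Type) (e : rel T) (f : T -> T) : Prop :=
  bijective f /\ forall x y, e x y = e (f x) (f y).

Definition is_core (T : finType) (e : rel T) : Prop :=
  forall f : T -> T, ghom e e f -> gauto e f.

Definition subgraph_rel (T : finType) (S : {set T}) (eD : rel T)
  : rel {x : T | x \in S} := fun u v => eD (val u) (val v).

Definition is_core_of (T : finType) (e : rel T) (S : {set T}) (eD : rel T) : Prop :=
  (forall x y, x \in S -> y \in S -> eD x y -> e x y) /\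
  is_core (@subgraph_rel T S eD) /\
  exists f : T -> {x : T | x \in S}, ghom e (@subgraph_rel T S eD) f.

Definition clique (T : finType) (e : rel T) (S : {set T}) : Prop :=
  forall x y, x \in S -> y \in S -> x != y -> e x y.

Definition max_clique (T : finType) (e : rel T) (S : {set T}) : Prop :=
  clique e S /\ forall S' : {set T}, clique e S' -> (#|S'| <= #|S|)%N.

Definition factors_through (R : finComUnitRingType) (m n : nat) (A : 'M[R]_(m, n)) (k : nat) : bool :=
  [exists B : 'M[R]_(m, k), exists C : 'M[R]_(k, n), A == B *m C].

Lemma factors_through_m (R : finComUnitRingType) (m n : nat) (A : 'M[R]_(m, n)) :
  exists k, factors_through A k.
Proof.
exists m; apply/existsP; exists 1%:M; apply/existsP; exists A.
by rewrite mul1mx.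
Qed.

(* inner rank: least k such that A = B C with B : m x k, C : k x n
   (this gives 0 for the zero matrix, matching rho(0) = 0) *)
Definition inner_rank (R : finComUnitRingType) (m n : nat) (A : 'M[R]_(m, n)) : nat :=
  ex_minn (factors_through_m A).

Definition Bil_adj (h m n r : nat) : rel 'M['Z_h]_(m, n) :=
  fun A B => (A != B) && (inner_rank (A - B) <= r)%N.
Arguments Bil_adj h m n r : clear implicits.

(* Main.v *)
Require Import Defs.
From HB Require Import structures.
From mathcomp Require Import all_boot all_order all_algebra all_field.
Set Implicit Arguments. Unset Strict Implicit. Unset Printing Implicit Defensive.
Import GRing.Theory.
Import VectorInternalTheory.
Local Open Scope ring_scope.
Section Moore.
Variables (p : nat) (F0 : finFieldType) (ch : p \in [pchar F0]).
Let L := pPrimeCharType ch.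
Let pr : prime p := pcharf_prime ch.

Lemma frobD k (x y : L) : (x + y) ^+ (p ^ k) = x ^+ (p ^ k) + y ^+ (p ^ k).
Proof.
apply: exprDn_pchar; rewrite pnatX (pnatE _ pr); apply/orP; left; exact: ch.
Qed.

Lemma frob0 k : (0 : L) ^+ (p ^ k) = 0.
Proof. by rewrite expr0n expn_eq0 (gtn_eqF (prime_gt0 pr)) andFb. Qed.

Lemma frob_sum k (I : Type) (s : seq I) (P : pred I) (F : I -> L) :
  (\sum_(i <- s | P i) F i) ^+ (p ^ k) = \sum_(i <- s | P i) F i ^+ (p ^ k).
Proof.
exact: (big_morph (fun x : L => x ^+ (p ^ k)) (@frobD k) (frob0 k)).
Qed.

Lemma frobFp k (a : 'F_p) : a ^+ (p ^ k) = a.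
Proof.
elim: k => [|k IH]; first by rewrite expr1.
by rewrite expnSr exprM IH; have := expf_card a; rewrite card_Fp.
Qed.

Lemma frobZ k (a : 'F_p) (x : L) : (a *: x) ^+ (p ^ k) = a *: x ^+ (p ^ k).
Proof. by rewrite exprZn frobFp. Qed.

Lemma moore t (u : t.-tuple L) (w : 'rV[L]_t) : w != 0 ->
  (forall k : 'I_t, \sum_(l < t) w 0 l * u`_l ^+ (p ^ k) = 0) -> ~~ free u.
Proof.
move=> w0 Hw; apply/negP => fu.
pose M : 'M[L]_t := \matrix_(l, k) u`_l ^+ (p ^ k).
have : \det M == 0.
  apply/det0P; exists w => //; apply/rowP => k; rewrite !mxE.
  by rewrite -[RHS](Hw k); apply: eq_bigr => l _; rewrite mxE.
rewrite -det_tr => /det0P [d d0 dM].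
pose P : {poly L} := \sum_(k < t) d 0 k *: 'X^(p ^ k).
have Pd (k : 'I_t) : P`_(p ^ k) = d 0 k.
  rewrite coef_sum (bigD1 k) //= coefZ coefXn eqxx mulr1.
  rewrite big1 ?addr0 // => j jk; rewrite coefZ coefXn.
  rewrite eqn_exp2l ?prime_gt1 //.
  have -> : (k == j :> nat) = false by apply/negbTE; rewrite eq_sym.
  by rewrite mulr0.
have P0 : P != 0.
  apply: contra d0 => /eqP P0; apply/eqP/rowP => k; rewrite mxE.
  by have := Pd k; rewrite P0 coef0 => <-.
have tgt0 : (0 < t)%N.
  by case: t u w w0 {Hw M d d0 dM P Pd P0 fu} => // u w; rewrite (thinmx0 w) eqxx.
have szP : (size P <= (p ^ t.-1).+1)%N.
  apply/leq_sizeP => j hj; rewrite coef_sum big1 // => k _; rewrite coefZ coefXn.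
  have -> : (j == p ^ k)%N = false.
    apply/negbTE; rewrite neq_ltn; apply/orP; right.
    apply: leq_trans hj; rewrite ltnS leq_exp2l ?prime_gt1 //.
    by rewrite -ltnS prednK.
  by rewrite mulr0.
have rootP z : z \in <<u>>%VS -> root P z.
  move=> zu; rewrite (coord_span zu); set c := coord u.
  rewrite /root horner_sum; apply/eqP.
  rewrite (eq_bigr (fun k : 'I_t => \sum_i c i z *: (d 0 k * u`_i ^+ (p ^ k)))); last first.
    move=> k _; rewrite hornerZ hornerXn frob_sum mulr_sumr; apply: eq_bigr => i _.
    by rewrite frobZ scalerAr.
  rewrite exchange_big /=; apply: big1 => i _; rewrite -scaler_sumr.
  suff -> : \sum_(k < t) d 0 k * u`_i ^+ (p ^ k) = 0 by rewrite scaler0.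
  have /rowP/(_ i) := dM; rewrite !mxE => E; rewrite -[RHS]E.
  by apply: eq_bigr => k _; rewrite !mxE.
have := max_poly_roots P0 (rs := enum (mem <<u>>%VS)).
rewrite enum_uniq; have -> : all (root P) (enum (mem <<u>>%VS)).
  by apply/allP => z; rewrite mem_enum; apply: rootP.
move=> /(_ isT isT); rewrite -cardE card_vspace card_Fp //.
move: fu; rewrite /free => /eqP ->; rewrite size_tuple => H.
have := leq_trans H szP; rewrite ltnS leqNgt => /negP; apply.
by rewrite ltn_exp2l ?prime_gt1 // prednK.
Qed.
End Moore.
Section MRD.
Variables (p : nat) (F0 : finFieldType) (ch : p \in [pchar F0]).
Let L := pPrimeCharType ch.
Let pr : prime p := pcharf_prime ch.
Variables (m r : nat) (mn : (m <= dim L)%N) (rm : (r <= m)%N).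

Let g (i : 'I_m) : L := r2v (delta_mx 0 (widen_ord mn i)).
Let S (k : nat) (E : 'M['F_p]_(m, dim L)) : L :=
  \sum_i g i ^+ (p ^ k) * r2v (row i E).
Definition mrd_psi (E : 'M['F_p]_(m, dim L)) : 'M['F_p]_(m, dim L) :=
  \matrix_(i, j) v2r (S i E) 0 j.

Lemma SD k A B : S k (A + B) = S k A + S k B.
Proof.
rewrite /S -big_split /=; apply: eq_bigr => i0 _.
by rewrite linearD /= linearD /= mulrDr.
Qed.

Lemma SZ k a A : S k (a *: A) = a *: S k A.
Proof.
rewrite /S scaler_sumr; apply: eq_bigr => i0 _.
by rewrite linearZ /= linearZ /= scalerAr.
Qed.

Lemma mrd_psiD A B : mrd_psi (A + B) = mrd_psi A + mrd_psi B.
Proof. by apply/matrixP => i j; rewrite !mxE SD linearD /= mxE. Qed.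

Lemma mrd_psiZ a A : mrd_psi (a *: A) = a *: mrd_psi A.
Proof. by apply/matrixP => i j; rewrite !mxE SZ linearZ /= mxE. Qed.

Lemma mrd_key E : E != 0 -> (\rank E <= r)%N ->
  exists (i : 'I_m) (j : 'I_(dim L)), (i < r)%N /\ mrd_psi E i j != 0.
Proof.
move=> E0 Er.
case: (boolP [exists i : 'I_m, exists j : 'I_(dim L), (i < r)%N && (mrd_psi E i j != 0)]).
  by move=> /existsP [i /existsP [j /andP [ir nz]]]; exists i, j.
move=> /existsPn H; exfalso.
have Sk (k : 'I_m) : (k < r)%N -> S k E = 0.
  move=> kr; apply: v2r_inj; rewrite linear0; apply/rowP => j; rewrite mxE.
  have := H k; move/existsPn/(_ j); rewrite mxE kr /= negbK => /eqP ->.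
  by [].
set t := \rank E.
have tgt0 : (0 < t)%N by rewrite lt0n mxrank_eq0.
have tr : (t <= r)%N := Er.
have tm : (t <= m)%N := leq_trans tr rm.
set P := col_base E; set Q := row_base E.
have EPQ : E = P *m Q by rewrite mulmx_base.
pose w : 'rV[L]_t := \row_l r2v (row l Q).
pose u : t.-tuple L := [tuple \sum_i P i l *: g i | l < t].
have rowEE i : r2v (row i E) = \sum_l P i l *: w 0 l.
  have -> : row i E = row i P *m Q by rewrite -row_mul -EPQ.
  rewrite mulmx_sum_row linear_sum /=; apply: eq_bigr => l _.
  by rewrite linearZ /= !mxE.
have Su (k : nat) : S k E = \sum_(l < t) w 0 l * u`_l ^+ (p ^ k).
  rewrite /S (eq_bigr (fun i => \sum_l P i l *: (g i ^+ (p ^ k) * w 0 l))); last first.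
    by move=> i _; rewrite rowEE mulr_sumr; apply: eq_bigr => l _; rewrite scalerAr.
  rewrite exchange_big /=; apply: eq_bigr => l _.
  rewrite nth_mktuple frob_sum mulr_sumr; apply: eq_bigr => i _.
  by rewrite frobZ mulrC -scalerAr.
have w0 : w != 0.
  apply/negP => /eqP /rowP /(_ (Ordinal tgt0)); rewrite !mxE => /eqP.
  rewrite -(linear0 (@r2v _ L)) => /eqP /r2v_inj.
  rewrite rowE -(mul0mx _ Q) => /(row_free_inj (row_base_free E)) /matrixP.
  by move=> /(_ 0 (Ordinal tgt0)); rewrite !mxE !eqxx /= => /eqP; rewrite oner_eq0.
have fu : free u.
  apply/freeP => c Hc l.
  have Hi (i : 'I_m) : \sum_l c l * P i l = 0.
    have : r2v (\sum_i (\sum_l c l * P i l) *: delta_mx 0 (widen_ord mn i)) = 0 :> L.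
      rewrite linear_sum /= -[RHS]Hc.
      rewrite (eq_bigr (fun i => \sum_l (c l * P i l) *: g i)); last first.
        by move=> i0 _; rewrite linearZ /= scaler_suml.
      rewrite exchange_big /=; apply: eq_bigr => l' _.
      by rewrite nth_mktuple scaler_sumr; apply: eq_bigr => i0 _; rewrite scalerA.
    rewrite -(linear0 (@r2v _ L)) => /r2v_inj /rowP /(_ (widen_ord mn i)).
    rewrite summxE (bigD1 i) //= [X in _ + X]big1 ?addr0.
      by rewrite !mxE !eqxx mulr1.
    move=> i' ii'; rewrite !mxE /=; case: eqP; last by rewrite mulr0.
    by move=> /(congr1 val) /= /val_inj ie; move: ii'; rewrite ie eqxx.
  have : \row_l c l *m P^T = 0.
    apply/rowP => i; rewrite !mxE -[RHS](Hi i); apply: eq_bigr => l' _.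
    by rewrite !mxE.
  rewrite -(mul0mx _ P^T) => /row_free_inj.
  have rf : row_free P^T.
    by rewrite /row_free mxrank_tr; apply: col_base_full.
  move=> /(_ rf) /rowP /(_ l); rewrite !mxE => ->.
  by [].
have H1 := @moore p F0 ch t u w w0.
move: fu; apply/negP; apply: H1 => k.
rewrite -Su; apply: (Sk (widen_ord tm k)).
by rewrite /= (leq_trans (ltn_ord k)).
Qed.


End MRD.
Definition Good (m n r q : nat) (Phi : 'I_m -> 'I_n -> 'I_m -> 'I_n -> int) : Prop :=
  forall E : 'M[int]_(m, n), map_mx (fun z : int => (z%:~R : 'F_q)) E != 0 ->
    (\rank (map_mx (fun z : int => (z%:~R : 'F_q)) E) <= r)%N ->
    exists (i : 'I_m) (j : 'I_n), (i < r)%N /\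
      ((\sum_k \sum_l Phi i j k l * E k l)%:~R : 'F_q) != 0.

Lemma good_dimL p (F0 : finFieldType) (ch : p \in [pchar F0]) m r :
  (m <= dim (pPrimeCharType ch))%N -> (r <= m)%N ->
  exists Phi, @Good m (dim (pPrimeCharType ch)) r p Phi.
Proof.
move=> mn rm; set psi := mrd_psi mn.
have psi0 : psi 0 = 0.
  have h := mrd_psiD mn 0 0; rewrite addr0 in h.
  by apply: (addrI (psi 0)); rewrite addr0 /psi -h.
have psi_sum (E : 'M['F_p]_(m, dim (pPrimeCharType ch))) :
    psi E = \sum_k \sum_l E k l *: psi (delta_mx k l).
  rewrite {1}(matrix_sum_delta E) (big_morph psi (mrd_psiD mn) psi0).
  apply: eq_bigr => k _; rewrite (big_morph psi (mrd_psiD mn) psi0).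
  by apply: eq_bigr => l _; rewrite /psi mrd_psiZ.
exists (fun i j k l => (nat_of_ord (psi (delta_mx k l) i j))%:Z).
move=> E E0 Er; have [i [j [ir nz]]] := mrd_key mn rm E0 Er.
exists i, j; split => //; move: nz; rewrite -/psi psi_sum rmorph_sum /= summxE.
congr (_ != 0); apply: eq_bigr => k _; rewrite rmorph_sum /= summxE.
apply: eq_bigr => l _; rewrite intrM mxE mxE mulrC.
by congr (_ * _); symmetry; exact: natr_Zp.
Qed.
Lemma fp_good q m n r : prime q -> (0 < n)%N -> (m <= n)%N -> (r <= m)%N ->
  exists Phi, @Good m n r q Phi.
Proof.
move=> pq n0 mn rm; have [F0 ch cardF] := pPrimePowerField pq n0.
have dimE : dim (pPrimeCharType ch) = n.
  rewrite -dimvf pprimeChar_dimf.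
  have -> : #|pPrimeCharType ch| = #|F0| by [].
  by rewrite cardF pfactorK.
move: mn; rewrite -dimE => mn; exact: good_dimL.
Qed.
Lemma Fp_nat0 q n : prime q -> ((n%:R : 'F_q) == 0) = (q %| n)%N.
Proof. by move=> pq; rewrite -val_eqE /= val_Fp_nat. Qed.

Lemma good_ext m n r q (Phi1 Phi2 : 'I_m -> 'I_n -> 'I_m -> 'I_n -> int) :
  (forall i j k l, Phi1 i j k l = Phi2 i j k l) -> Good r q Phi1 -> Good r q Phi2.
Proof.
move=> e G E E0 Er; have [i [j [ir nz]]] := G E E0 Er; exists i, j; split => //.
by move: nz; congr (_ != 0); congr (_%:~R); apply: eq_bigr => k _; apply: eq_bigr => l _; rewrite e.
Qed.

Lemma good_comb m n r q (Phi Phi' : 'I_m -> 'I_n -> 'I_m -> 'I_n -> int) (a : int) :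
  Good r q Phi -> (a%:~R : 'F_q) != 0 ->
  (forall i j k l, ((Phi' i j k l)%:~R : 'F_q) = 0) ->
  Good r q (fun i j k l => a * Phi i j k l + Phi' i j k l).
Proof.
move=> G a0 H0 E E0 Er; have [i [j [ir nz]]] := G E E0 Er.
exists i, j; split => //.
have -> : ((\sum_k \sum_l (a * Phi i j k l + Phi' i j k l) * E k l)%:~R : 'F_q)
   = a%:~R * (\sum_k \sum_l Phi i j k l * E k l)%:~R.
  rewrite !rmorph_sum /= mulr_sumr; apply: eq_bigr => k _.
  rewrite !rmorph_sum /= mulr_sumr; apply: eq_bigr => l _.
  by rewrite !intrM intrD intrM H0 addr0 mulrA.
by rewrite mulf_neq0.
Qed.

Lemma good_all m n r (s : seq nat) : (0 < n)%N -> (m <= n)%N -> (r <= m)%N ->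
  uniq s -> all prime s ->
  exists Phi, forall q, q \in s -> @Good m n r q Phi.
Proof.
move=> n0 mn rm; elim: s => [|q s IH] /=.
  by move=> _ _; exists (fun _ _ _ _ => 0).
move=> /andP [qs us] /andP [pq ps].
have [Phi' G'] := IH us ps.
have [Psi G] := fp_good pq n0 mn rm.
set M := (\prod_(x <- s) x)%N.
have pdiv q' : prime q' -> (q' %| M)%N = (q' \in s).
  move=> pq'; rewrite /M Euclid_dvd_prod // big_has.
  apply/hasP/idP => [[x xs]|qs']; last by exists q'.
  have px : prime x by move/allP: ps => /(_ x xs).
  by rewrite dvdn_prime2 // => /eqP ->.
exists (fun i j k l => M%:Z * Psi i j k l + q%:Z * Phi' i j k l).
move=> q'; rewrite in_cons => /orP [/eqP -> | q's].
  apply: good_comb => //.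
    by rewrite -[_%:~R]/(M%:R) Fp_nat0 // pdiv.
  by move=> i j k l; rewrite intrM -[(q%:Z)%:~R]/(q%:R) pchar_Fp_0 // mul0r.
have pq' : prime q' by move/allP: ps => /(_ q' q's).
apply: (@good_ext _ _ _ _ (fun i j k l => q%:Z * Phi' i j k l + M%:Z * Psi i j k l)).
  by move=> *; rewrite addrC.
apply: good_comb; first exact: G'.
  rewrite -[_%:~R]/(q%:R) Fp_nat0 // dvdn_prime2 //.
  by apply: contra qs => /eqP <-.
move=> i j k l; rewrite intrM -[(M%:Z)%:~R]/(M%:R).
have /eqP -> : (M%:R : 'F_q') == 0 by rewrite Fp_nat0 // pdiv.
by rewrite mul0r.
Qed.
Lemma intr_eq0_gen (R : pzRingType) (N : nat) :
  (forall n : nat, ((n%:R : R) == 0) = (N %| n)%N) ->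
  forall z : int, ((z%:~R : R) == 0) = (N%:Z %| z)%Z.
Proof.
move=> H [n|n]; first by rewrite -[(Posz n)%:~R]/(n%:R) H.
by rewrite NegzE mulrNz oppr_eq0 -[(Posz n.+1)%:~R]/(n.+1%:R) H.
Qed.

Lemma Fp_int0 q (z : int) : prime q -> ((z%:~R : 'F_q) == 0) = (q%:Z %| z)%Z.
Proof. by move=> pq; apply: intr_eq0_gen => n; apply: Fp_nat0. Qed.

Lemma Zh_int0 h (z : int) : (1 < h)%N -> ((z%:~R : 'Z_h) == 0) = (h%:Z %| z)%Z.
Proof.
move=> h1; apply: intr_eq0_gen => n.
by rewrite -val_eqE /= val_Zp_nat.
Qed.
Lemma rank_bound h p m n k (B : 'M['Z_h]_(m, k)) (C : 'M['Z_h]_(k, n)) (E : 'M[int]_(m, n)) :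
  (1 < h)%N -> prime p -> ((h %/ p) * p)%N = h -> (k <= m)%N ->
  map_mx (fun z : int => (z%:~R : 'Z_h)) ((h %/ p)%:Z *: E) = B *m C ->
  (\rank (map_mx (fun z : int => (z%:~R : 'F_p)) E) <= k)%N.
Proof.
move=> h1 pp hpp km eBC.
set hp := (h %/ p)%N.
have hp0 : (0 < hp)%N by rewrite lt0n; apply/eqP => e; move: hpp; rewrite -/hp e mul0n => e0; move: h1; rewrite -e0.
pose iB := map_mx (fun x : 'Z_h => (nat_of_ord x)%:Z) B.
have BiB : B = map_mx (fun z : int => (z%:~R : 'Z_h)) iB.
  by apply/matrixP => i j; rewrite !mxE; symmetry; exact: natr_Zp.
have [L0 uL [R0 uR [d _ eB]]] := int_Smith_normal_form iB.
set L1 := invmx L0.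
have zr (i : 'I_m) (j : 'I_k) : (k <= i)%N -> (L1 *m iB) i j = 0.
  move=> ki; rewrite eB !mulmxA mulVmx // mul1mx !mxE big1 // => l _.
  rewrite !mxE; have -> : (i == l :> nat) = false.
    by apply/negbTE; rewrite neq_ltn; apply/orP; right; apply: leq_trans (ltn_ord l) ki.
  by rewrite mulr0n mul0r.
set Y := L1 *m E.
have hY (i : 'I_m) (j : 'I_n) : (k <= i)%N -> (p%:Z %| Y i j)%Z.
  move=> ki.
  have e1 : map_mx (fun z : int => (z%:~R : 'Z_h)) (L1 *m ((hp%:Z) *: E))
        = map_mx (fun z : int => (z%:~R : 'Z_h)) (L1 *m iB) *m C.
    by rewrite !map_mxM eBC -BiB mulmxA.
  have /matrixP/(_ i j) := e1; rewrite mxE [RHS]mxE big1; last first.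
    by move=> l _; rewrite mxE zr // mul0r.
  rewrite -scalemxAr mxE => /eqP; rewrite Zh_int0 // -hpp PoszM dvdz_mul2l //.
  by rewrite eqz_nat -lt0n.
set X := map_mx (fun z : int => (z%:~R : 'F_p)) Y.
have XE : X = pid_mx k *m X.
  apply/matrixP => i j; rewrite [RHS]mxE (bigD1 i) //= big1 ?addr0; last first.
    by move=> l il; rewrite !mxE (inj_eq val_inj) eq_sym (negbTE il) mul0r.
  rewrite !mxE eqxx /=; case: ltnP => ki; first by rewrite mul1r.
  by rewrite mul0r; apply/eqP; rewrite Fp_int0 //; have := hY i j ki; rewrite mxE.
have EX : map_mx (fun z : int => (z%:~R : 'F_p)) E = map_mx (fun z : int => (z%:~R : 'F_p)) L0 *m X.
  by rewrite -map_mxM /Y mulmxA mulmxV // mul1mx.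
rewrite EX (leq_trans (mxrankM_maxr _ _)) // XE (leq_trans (mxrankM_maxl _ _)) //.
by rewrite rank_pid_mx.
Qed.
Lemma ir_le (R : finComUnitRingType) m n (A : 'M[R]_(m, n)) k :
  factors_through A k -> (inner_rank A <= k)%N.
Proof. by rewrite /inner_rank; case: ex_minnP => k' _ H; apply: H. Qed.

Lemma ir_fac (R : finComUnitRingType) m n (A : 'M[R]_(m, n)) :
  factors_through A (inner_rank A).
Proof. by rewrite /inner_rank; case: ex_minnP. Qed.

Lemma fac_mulrn (R : finComUnitRingType) m n (A : 'M[R]_(m, n)) k c :
  factors_through A k -> factors_through (A *+ c) k.
Proof.
move=> /existsP [B /existsP [C /eqP e]].
apply/existsP; exists (B *+ c); apply/existsP; exists C.
by rewrite e -!scaler_nat scalemxAl.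
Qed.

Lemma ir_mulrn (R : finComUnitRingType) m n (A : 'M[R]_(m, n)) c :
  (inner_rank (A *+ c) <= inner_rank A)%N.
Proof. exact/ir_le/fac_mulrn/ir_fac. Qed.

Lemma key_Zh h m n r (Phi : 'I_m -> 'I_n -> 'I_m -> 'I_n -> int) :
  (1 < h)%N -> (r <= m)%N ->
  (forall q, q \in primes h -> Good r q Phi) ->
  forall D : 'M['Z_h]_(m, n), D != 0 -> (inner_rank D <= r)%N ->
  (forall (i : 'I_m) (j : 'I_n), (i < r)%N ->
     \sum_k \sum_l (Phi i j k l)%:~R * D k l = 0) -> False.
Proof.
move=> h1 rm G D0 D0n D0r D0L.
have ex : exists k, (0 < k)%N && (D0 *+ k == 0).
  by exists h; rewrite (ltnW h1) /= -scaler_nat pchar_Zp // scale0r eqxx.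
case: (ex_minnP ex) => o /andP [o0 /eqP Do] omin.
have o1 : (1 < o)%N.
  rewrite ltn_neqAle o0 andbT; apply/eqP => e; move: D0n; rewrite -Do -e.
  by rewrite mulr1n eqxx.
have [p pp po] : exists2 p, prime p & (p %| o)%N.
  by exists (pdiv o); [exact: pdiv_prime | exact: pdiv_dvd].
have [c oc] : exists c, o = (c * p)%N by exists (o %/ p)%N; rewrite divnK.
have c0 : (0 < c)%N by move: o0; rewrite oc muln_gt0 => /andP [].
have co : (c < o)%N by rewrite oc ltn_Pmulr // prime_gt1.
have [D eD] : exists D, D = D0 *+ c by eexists.
have Dn : D != 0.
  apply/eqP => e; have := omin c; rewrite c0 -eD e eqxx => /(_ isT).
  by rewrite leqNgt co.
have Dp : D *+ p = 0 by rewrite eD -mulrnA -oc Do.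
have Dr : (inner_rank D <= r)%N by rewrite eD; exact: leq_trans (ir_mulrn _ _) D0r.
have DL (i : 'I_m) (j : 'I_n) : (i < r)%N ->
     \sum_k \sum_l (Phi i j k l)%:~R * D k l = 0.
  move=> ir; transitivity ((\sum_k \sum_l (Phi i j k l)%:~R * D0 k l) *+ c); last first.
    by rewrite D0L // mul0rn.
  rewrite -sumrMnl.
  apply: eq_bigr => k _; rewrite -sumrMnl; apply: eq_bigr => l _.
  by rewrite eD -scaler_nat mxE mulrCA mulr_natl.
clear eD D0 D0n D0r D0L Do ex omin.
have hdiv (x : 'Z_h) : x *+ p = 0 -> (h %| x * p)%N.
  move/(congr1 (@nat_of_ord _)); rewrite Zp_mulrn /= => e.
  by rewrite -[X in (X %| _)%N](Zp_cast h1) /dvdn e.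
have Dkl k l : D k l *+ p = 0.
  by have /matrixP/(_ k l) := Dp; rewrite -scaler_nat !mxE mulr_natl.
have [k0 [l0 nz]] : exists k l, D k l != 0.
  case: (boolP [exists k, exists l, D k l != 0]).
    by move=> /existsP [k /existsP [l nz]]; exists k, l.
  move=> /existsPn H; exfalso; move: Dn; apply/negP; rewrite negbK; apply/eqP/matrixP => k l.
  by have /existsPn/(_ l) := H k; rewrite negbK mxE => /eqP.
have xlt (x : 'Z_h) : (x < h)%N by rewrite -[X in (_ < X)%N](Zp_cast h1).
have pdh : (p %| h)%N.
  apply: contraT => npd; have cop : coprime h p by rewrite coprime_sym prime_coprime.
  have := hdiv _ (Dkl k0 l0); rewrite Gauss_dvdl // => /dvdn_leq.
  have x0 : (0 < D k0 l0)%N by rewrite lt0n; move: nz; apply: contra => /eqP e; apply/eqP/val_inj.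
  by move=> /(_ x0); rewrite leqNgt xlt.
have [hp hpp] : exists hp, (hp * p)%N = h by exists (h %/ p)%N; rewrite divnK.
have hp0 : (0 < hp)%N by move: (ltnW h1); rewrite -hpp muln_gt0 => /andP [].
have ediv (x : 'Z_h) : x *+ p = 0 -> (hp %| x)%N.
  by move=> /hdiv; rewrite -{1}hpp dvdn_pmul2r // prime_gt0.
pose E : 'M[int]_(m, n) := \matrix_(k, l) (((D k l : nat) %/ hp)%N)%:Z.
have DEkl k l : D k l = ((hp%:Z * E k l)%:~R : 'Z_h).
  by rewrite mxE -PoszM mulnC divnK ?ediv ?Dkl //; symmetry; exact: natr_Zp.
have DE : D = map_mx (fun z : int => (z%:~R : 'Z_h)) (hp%:Z *: E).
  by apply/matrixP => k l; rewrite {1}DEkl !mxE.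
have /existsP [B /existsP [C /eqP eBC]] := ir_fac D.
have hpE : (h %/ p)%N = hp by rewrite -hpp mulnK // prime_gt0.
have Er : (\rank (map_mx (fun z : int => (z%:~R : 'F_p)) E) <= r)%N.
  apply: (leq_trans _ (Dr)); apply: (rank_bound (h := h) (B := B) (C := C)) => //.
    by rewrite hpE.
    exact: leq_trans (Dr) rm.
  by rewrite hpE -DE.
have E0 : map_mx (fun z : int => (z%:~R : 'F_p)) E != 0.
  apply/negP => /eqP /matrixP /(_ k0 l0); rewrite !mxE => /eqP.
  rewrite -[_%:~R]/(_%:R) Fp_nat0 //.
  have x0 : (0 < D k0 l0)%N by rewrite lt0n; move: nz; apply: contra => /eqP e; apply/eqP/val_inj.
  have hpx := ediv _ (Dkl k0 l0).
  move=> /dvdn_leq; rewrite divn_gt0 // dvdn_leq // => /(_ isT).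
  by rewrite leqNgt ltn_divLR // mulnC hpp xlt.
have pin : p \in primes h by rewrite mem_primes pp (ltnW h1) pdh.
have [i [j [ir nzE]]] := G p pin E E0 Er.
move: nzE; apply/negP; rewrite negbK Fp_int0 //.
have := DL i j ir.
rewrite (eq_bigr (fun k => \sum_l ((Phi i j k l * (hp%:Z * E k l))%:~R : 'Z_h))); last first.
  by move=> k _; apply: eq_bigr => l _; rewrite DEkl [RHS]intrM.
rewrite -(eq_bigr _ (fun k _ => rmorph_sum _ _ _ _)) -rmorph_sum /= => /eqP.
rewrite Zh_int0 // -hpp PoszM.
rewrite (eq_bigr (fun k => hp%:Z * \sum_l Phi i j k l * E k l)); last first.
  by move=> k _; rewrite mulr_sumr; apply: eq_bigr => l _; rewrite mulrCA.
by rewrite -mulr_sumr dvdz_mul2l // eqz_nat -lt0n.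
Qed.

Definition Sset h m n r : {set 'M['Z_h]_(m, n)} :=
  [set A : 'M['Z_h]_(m, n) | [forall i : 'I_m, forall j : 'I_n, (r <= i)%N ==> (A i j == 0)]].

Lemma SsetP h m n r (A : 'M['Z_h]_(m, n)) :
  reflect (forall (i : 'I_m) (j : 'I_n), (r <= i)%N -> A i j = 0) (A \in Sset h m n r).
Proof.
rewrite inE; apply: (iffP forallP) => [H i j ri | H i].
  by have /forallP/(_ j) := H i; rewrite ri /= => /eqP.
by apply/forallP => j; apply/implyP => ri; rewrite H.
Qed.

Lemma pid_rows (R : pzSemiRingType) m n r (X : 'M[R]_(m, n)) :
  (forall (i : 'I_m) (j : 'I_n), (r <= i)%N -> X i j = 0) -> (pid_mx r : 'M_m) *m X = X.
Proof.
move=> H; apply/matrixP => i j; rewrite mxE (bigD1 i) //= big1 ?addr0; last first.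
  by move=> l il; rewrite !mxE (inj_eq val_inj) eq_sym (negbTE il) mul0r.
rewrite !mxE eqxx /=; case: ltnP => ki; first by rewrite mul1r.
by rewrite mul0r H.
Qed.

Lemma Sset_fac h m n r (D : 'M['Z_h]_(m, n)) : (r <= m)%N ->
  (forall (i : 'I_m) (j : 'I_n), (r <= i)%N -> D i j = 0) -> factors_through D r.
Proof.
move=> rm H; apply/existsP; exists (pid_mx r); apply/existsP.
exists (pid_mx r *m D); rewrite mulmxA mul_pid_mx.
have -> : minn r (minn r r) = r by rewrite minnn minnn.
by rewrite pid_rows.
Qed.

Lemma Sset_clique h m n r : (r <= m)%N -> clique (Bil_adj h m n r) (Sset h m n r).
Proof.
move=> rm x y /SsetP xS /SsetP yS xy; rewrite /Bil_adj xy /=.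
apply: ir_le; apply: Sset_fac => // i j ri; rewrite !mxE xS ?yS ?subrr //.
Qed.

Lemma card_Zh h : (1 < h)%N -> #|'Z_h| = h.
Proof. by move=> h1; rewrite card_ord Zp_cast. Qed.

Lemma card_Sset h m n r : (1 < h)%N -> (r <= m)%N -> #|Sset h m n r| = (h ^ (n * r))%N.
Proof.
move=> h1 rm.
pose emb (X : 'M['Z_h]_(r, n)) : 'M['Z_h]_(m, n) :=
  \matrix_(i, j) (if insub (nat_of_ord i) is Some i' then X i' j else 0).
have embK X : \matrix_(i', j) emb X (widen_ord rm i') j = X.
  apply/matrixP => i' j; rewrite !mxE; case: insubP => [i'' _ e|]; last by rewrite /= ltn_ord.
  by congr (X _ j); apply/val_inj.
have inj : injective emb by move=> X Y e; rewrite -(embK X) -(embK Y) e.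
have -> : Sset h m n r = [set emb X | X in [set: 'M['Z_h]_(r, n)]].
  apply/setP => A; apply/SsetP/imsetP => [H | [X _ ->] i j ri].
    exists (\matrix_(i', j) A (widen_ord rm i') j); first by rewrite inE.
    apply/matrixP => i j; rewrite !mxE; case: insubP => [i' ir e|].
      by rewrite mxE; congr (A _ j); apply/val_inj.
    by rewrite -leqNgt => ri; rewrite H.
  by rewrite mxE; case: insubP => //= i' ir _; move: ir; rewrite ltnNge ri.
by rewrite card_imset // cardsT card_mx card_Zh // mulnC.
Qed.

Lemma color_exists h m n r : (1 < h)%N -> (1 <= r)%N -> (r <= m)%N -> (m <= n)%N ->
  exists f : 'M['Z_h]_(m, n) -> 'M['Z_h]_(m, n),
    (forall A, f A \in Sset h m n r) /\
    (forall A B, Bil_adj h m n r A B -> f A != f B).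
Proof.
move=> h1 r1 rm mn; case: (ltnP r m) => [rltm | mler]; last first.
  have e : r = m by apply/eqP; rewrite eqn_leq rm mler.
  exists id; split; last by move=> A B /andP [].
  by move=> A; apply/SsetP => i j ri; move: (ltn_ord i); rewrite ltnNge (leq_trans mler ri).
have n0 : (0 < n)%N by apply: leq_trans mn; apply: leq_trans rltm.
have [Phi G] := @good_all m n r (primes h) n0 mn rm (primes_uniq h) (all_prime_primes h).
exists (fun A => \matrix_(i, j) (if (i < r)%N then \sum_k \sum_l (Phi i j k l)%:~R * A k l else 0)).
split.
  by move=> A; apply/SsetP => i j ri; rewrite mxE ltnNge ri.
move=> A B /andP [AB ABr]; apply/negP => /eqP e.
apply: (@key_Zh h m n r Phi h1 rm G (A - B)) => //; first by rewrite subr_eq0.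
move=> i j ir; have /matrixP/(_ i j) := e; rewrite !mxE ir => eAB.
rewrite (eq_bigr (fun k => \sum_l (Phi i j k l)%:~R * A k l - \sum_l (Phi i j k l)%:~R * B k l)).
  by rewrite sumrB eAB subrr.
by move=> k _; rewrite -sumrB; apply: eq_bigr => l _; rewrite !mxE mulrBr.
Qed.
Local Close Scope ring_scope.

Theorem corollary3p10 (h m n r : nat) :
  (1 < h)%N -> (1 <= r)%N -> (r <= m)%N -> (m <= n)%N ->
  (exists (S : {set 'M['Z_h]_(m, n)}) (eD : rel 'M['Z_h]_(m, n)),
      is_core_of (Bil_adj h m n r) S eD /\
      (forall x y, x \in S -> y \in S -> eD x y = (x != y)) /\
      #|S| = (h ^ (n * r))%N /\
      max_clique (Bil_adj h m n r) S) /\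
  (is_core (Bil_adj h m n r) <-> r = m).
Proof.
move=> h1 r1 rm mn.
have [col [colS colA]] := color_exists h1 r1 rm mn.
have cl := @Sset_clique h m n r rm.
split.
  exists (Sset h m n r), (fun x y => x != y).
  split; last split; last split.
  - split; first by move=> x y xS yS; exact: cl.
    split.
      move=> f hf.
      have inj : injective f.
        move=> x y e; apply/eqP; apply: contraT => nxy.
        have := hf x y; rewrite /subgraph_rel (inj_eq val_inj) => /(_ nxy).
        by rewrite e eqxx.
      split; first exact: injF_bij.
      by move=> x y; rewrite /subgraph_rel !(inj_eq val_inj) (inj_eq inj).
    exists (fun A => exist (fun x => x \in Sset h m n r) (col A) (colS A)).
    by move=> x y /colA.
  - by [].
  - exact: card_Sset.
  split; first exact: cl.
  move=> S' cS'.
  have inj : {in S' &, injective col}.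
    move=> x y xS yS e; apply/eqP; apply: contraT => nxy.
    by have := colA x y (cS' x y xS yS nxy); rewrite e eqxx.
  rewrite -(card_in_imset inj); apply: subset_leq_card.
  by apply/subsetP => z /imsetP [x _ ->].
split => [Hc | e].
  apply/eqP; rewrite eqn_leq rm /=; rewrite leqNgt; apply/negP => rltm.
  have hg : ghom (Bil_adj h m n r) (Bil_adj h m n r) col.
    by move=> x y /colA nxy; apply: cl.
  have [[g colK _] _] := Hc col hg.
  have inj : injective col := can_inj colK.
  have : (#|[set col x | x in [set: 'M['Z_h]_(m, n)]]| <= #|Sset h m n r|)%N.
    by apply: subset_leq_card; apply/subsetP => z /imsetP [x _ ->].
  rewrite card_imset // cardsT card_mx card_Zh // card_Sset // leqNgt.
  rewrite ltn_exp2l // [X in (_ < X)]mulnC ltn_pmul2l ?rltm //.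
  by apply: leq_trans mn; apply: leq_trans rltm.
subst r.
have adj x y : Bil_adj h m n m x y = (x != y).
  rewrite /Bil_adj; case: (x != y) => //=; apply: ir_le.
  by apply/existsP; exists (1%:M)%R; apply/existsP; exists (x - y)%R; rewrite mul1mx.
move=> f hf.
have inj : injective f.
  move=> x y e; apply/eqP; apply: contraT => nxy.
  by have := hf x y; rewrite adj e /Bil_adj eqxx => /(_ nxy).
split; first exact: injF_bij.
by move=> x y; rewrite !adj (inj_eq inj).
Qed.
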